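(* Let $(H,\langle\cdot,\cdot\rangle)$ be a real Hilbert space, regarded as an SSD space with bilinear form $\langle\cdot,\cdot\rangle$, so that $q(x)=\frac12\|x\|^2$. A nonempty set $A\subset H$ is $q$-representable if and only if $A$ is closed.
   Context: Every nonempty subset of $H$ is $q$-positive here since $q\ge0$. A nonempty set $A\subset H$ is $q$-representable if there exists a weakly lower semicontinuous (equivalently, since convex, norm lower semicontinuous) proper convex function $f:H\to\mathbb{R}\cup\{+\infty\}$ with $f\ge q$ on $H$ and $\{x: f(x)=q(x)\}=A$. *)

(* Defs.v *)
From HB Require Import structures.
From mathcomp Require Import all_boot all_order all_algebra.
From mathcomp Require Import all_classical all_reals all_analysis.
Set Implicit Arguments. Unset Strict Implicit. Unset Printing Implicit Defensive.
Import Order.TTheory GRing.Theory Num.Theory.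
Import numFieldNormedType.Exports.
Local Open Scope classical_set_scope.
Local Open Scope ring_scope.

Definition is_hilbert_inner (R : realType) (H : completeNormedModType R)
  (ip : H -> H -> R) : Prop :=
  [/\ (forall (a : R) (x y z : H), ip (a *: x + y) z = a * ip x z + ip y z),
      (forall x y : H, ip x y = ip y x) &
      (forall x : H, ip x x = `|x| ^+ 2)].

Definition qform (R : realType) (H : completeNormedModType R)
  (ip : H -> H -> R) (x : H) : R := ip x x / 2.

Local Open Scope ereal_scope.

Definition proper_fun (R : realType) (H : completeNormedModType R)
  (f : H -> \bar R) : Prop :=
  (forall x, f x != -oo) /\ (exists x, f x != +oo).

Definition convex_efun (R : realType) (H : completeNormedModType R)
  (f : H -> \bar R) : Prop :=
  forall (x y : H) (t : R), (0 < t)%R -> (t < 1)%R ->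
    f (t *: x + (1 - t) *: y)%R <= t%:E * f x + (1 - t)%:E * f y.

(* q-representable set (norm lower semicontinuity; equivalent to weak lsc
   for convex functions). *)
Definition q_representable (R : realType) (H : completeNormedModType R)
  (ip : H -> H -> R) (A : set H) : Prop :=
  exists f : H -> \bar R,
    [/\ lower_semicontinuous f, proper_fun f, convex_efun f,
        (forall x, (qform ip x)%:E <= f x) &
        [set x | f x = (qform ip x)%:E] = A].

(* Main.v *)
Require Import Defs.
From HB Require Import structures.
From mathcomp Require Import all_boot all_order all_algebra.
From mathcomp Require Import all_classical all_reals all_analysis.
From mathcomp Require Import ring lra.
Import Order.TTheory GRing.Theory Num.Theory.
Import numFieldNormedType.Exports.
Local Open Scope classical_set_scope.
Local Open Scope ring_scope.

Section S.
Variables (R : realType) (H : completeNormedModType R) (ip : H -> H -> R).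
Hypothesis hip : is_hilbert_inner ip.

Lemma ip0l z : ip 0 z = 0.
Proof.
case: hip => hl _ _; have := hl 1 0 0 z; rewrite scaler0 addr0 mul1r.
move=> h; have : ip 0 z + ip 0 z - ip 0 z = ip 0 z - ip 0 z by rewrite -h. by rewrite addrK subrr.
Qed.
Lemma ipDl x y z : ip (x + y) z = ip x z + ip y z.
Proof. by case: hip => hl _ _; rewrite -[x]scale1r hl mul1r scale1r. Qed.
Lemma ipZl a x z : ip (a *: x) z = a * ip x z.
Proof. by case: hip => hl _ _; rewrite -[a *: x]addr0 hl ip0l addr0. Qed.
Lemma ipDr x y z : ip z (x + y) = ip z x + ip z y.
Proof. by case: hip => _ hs _; rewrite !(hs z) ipDl. Qed.
Lemma ipZr a x z : ip z (a *: x) = a * ip z x.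
Proof. by case: hip => _ hs _; rewrite !(hs z) ipZl. Qed.
Lemma ipNl x z : ip (- x) z = - ip x z.
Proof. by rewrite -scaleN1r ipZl mulN1r. Qed.
Lemma ipNr x z : ip z (- x) = - ip z x.
Proof. by rewrite -scaleN1r ipZr mulN1r. Qed.
Lemma ipnorm x : ip x x = `|x| ^+ 2.
Proof. by case: hip. Qed.
Lemma ipsym x y : ip x y = ip y x.
Proof. by case: hip. Qed.

Lemma polar c x : ip c x = (`|c + x| ^+ 2 - `|c| ^+ 2 - `|x| ^+ 2) / 2.
Proof.
rewrite -!ipnorm ipDl !ipDr (ipsym x c); by field.
Qed.

Lemma sqdist a b : ip (a - b) (a - b) = ip a a - 2 * ip b a + ip b b.
Proof.
rewrite ipDl !ipDr !ipNl !ipNr (ipsym a b) opprK; ring.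
Qed.

Lemma cont_aff c (be : R) : continuous (fun y => ip c y + be).
Proof.
pose F := fun y : H => `|c + y|.
pose N := fun y : H => `|y|.
have hF : continuous F.
  move=> y; apply: (continuous_comp (f := fun y => c + y)).
    by apply: continuousD; [exact: cvg_cst | exact: cvg_id].
  exact: norm_continuous.
have hN : continuous N by move=> y; exact: norm_continuous.
have key : continuous (((F \* F) - (fun=> `|c|^+2) - (N \* N)) \* (fun=> 2^-1) + (fun=> be)).
  move=> y; apply: continuousD; last exact: cvg_cst.
  apply: continuousM; last exact: cvg_cst.
  apply: continuousB; last exact: (continuousM (hN y) (hN y)).
  apply: continuousB; last exact: cvg_cst.
  exact: (continuousM (hF y) (hF y)).
have -> : (fun y => ip c y + be) =
  (((F \* F) - (fun=> `|c|^+2) - (N \* N)) \* (fun=> 2^-1) + (fun=> be)).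
  by apply: funext => y; rewrite polar /F /N /= !expr2.
exact: key.
Qed.

Lemma cont_q : continuous (qform ip).
Proof.
pose N := fun y : H => `|y|.
have hN : continuous N by move=> y; exact: norm_continuous.
have key : continuous ((N \* N) \* (fun=> 2^-1)).
  move=> y; apply: continuousM; last exact: cvg_cst.
  exact: (continuousM (hN y) (hN y)).
have -> : qform ip = ((N \* N) \* (fun=> 2^-1)).
  by apply: funext => y; rewrite /qform ipnorm /N /= expr2.
exact: key.
Qed.

Lemma dir1 (A : set H) : q_representable ip A -> closed A.
Proof.
move=> [f [lscf _ _ fge fA]].
rewrite -openC openE => x /= nAx.
have hx : ((qform ip x)%:E < f x)%E.
  rewrite lt_neqAle fge andbT; apply/negP => /eqP hq.
  by apply: nAx; rewrite -fA /= hq.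
have [a [ha1 ha2]] : exists a : R, ((a%:E < f x)%E /\ qform ip x < a).
  move: hx; case: (f x) => [r| |] //.
  - rewrite lte_fin => hr; exists ((qform ip x + r) / 2); split.
      by rewrite lte_fin; lra.
    lra.
  - by move=> _; exists (qform ip x + 1); split; [exact: ltry | lra].
have [V Vx Va] := lscf x a ha1.
have W : nbhs x (qform ip @^-1` [set z | z < a]).
  apply: open_nbhs_nbhs; split => //.
  apply: open_comp; [by move=> z _; exact: cont_q | exact: open_lt].
apply: filterS2 Vx W => y Vy /= Wy Ay.
have := Va y Vy; move: Ay; rewrite -fA /= => ->; rewrite lte_fin => h.
by have := lt_trans h Wy; rewrite ltxx.
Qed.

Lemma dir2 (A : set H) : A !=set0 -> closed A -> q_representable ip A.
Proof.
move=> [a0 Aa0] cA.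
pose S := [set p : H * R | forall a, A a -> ip p.1 a + p.2 <= qform ip a].
pose f := fun x => ereal_sup [set (ip p.1 x + p.2)%:E | p in S].
have ub : forall p x, S p -> ((ip p.1 x + p.2)%:E <= f x)%E.
  by move=> p x Sp; apply: ereal_sup_ubound; exists p.
have tang : forall b, S (b, - qform ip b).
  move=> b a _ /=; rewrite /qform.
  have := sqdist a b; rewrite ipnorm => h.
  have : 0 <= `|a - b| ^+ 2 by apply: exprn_ge0.
  lra.
have fge : forall x, ((qform ip x)%:E <= f x)%E.
  move=> x; apply: le_trans (ub _ x (tang x)); rewrite lee_fin /qform /=; lra.
have fle : forall a, A a -> (f a <= (qform ip a)%:E)%E.
  by move=> a Aa; apply: ge_ereal_sup => _ [p Sp <-]; rewrite lee_fin; exact: Sp.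
have fgt : forall b, ~ A b -> ((qform ip b)%:E < f b)%E.
  move=> b nAb.
  have : nbhs b (~` A) by apply: open_nbhs_nbhs; split => //; exact: closed_openC.
  move=> /nbhs_ballP [e /= e0 he].
  have Sp : S (b, - qform ip b + e ^+ 2 / 2).
    move=> a Aa /=; rewrite /qform.
    have := sqdist a b; rewrite ipnorm => h.
    have : e <= `|a - b|.
      rewrite leNgt; apply/negP => hlt; apply: (he a) => //.
      by rewrite -ball_normE /ball_ /= distrC.
    move=> hle.
    have : e * e <= `|a - b| * `|a - b| by apply: ler_pM => //; exact: ltW.
    rewrite -!expr2; lra.
  apply: lt_le_trans (ub _ b Sp); rewrite lte_fin /qform /=.
  have : 0 < e ^+ 2 by apply: exprn_gt0.
  lra.
exists f; split.
- move=> x a /ereal_sup_gt [_ [p Sp <-]]; rewrite lte_fin => ha.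
  exists [set y | a < ip p.1 y + p.2].
    apply: open_nbhs_nbhs; split => //.
    have := @open_comp _ _ (fun y => ip p.1 y + p.2) [set z | a < z]
      (fun z _ => cont_aff p.1 p.2 z) (@open_gt R a).
    by [].
  move=> y /= hy; apply: lt_le_trans (ub p y Sp); by rewrite lte_fin.
- split.
    by move=> x; rewrite gt_eqF //; apply: lt_le_trans (fge x); exact: ltNyr.
  exists a0; have -> : f a0 = (qform ip a0)%:E.
    by apply/le_anti; rewrite fle // fge.
  by [].
- move=> x y t t0 t1; apply: ge_ereal_sup => _ [p Sp <-].
  have e : ip p.1 (t *: x + (1 - t) *: y) + p.2 =
      t * (ip p.1 x + p.2) + (1 - t) * (ip p.1 y + p.2).
    by rewrite ipDr !ipZr; ring.
  rewrite e EFinD !EFinM; apply: leeD.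
    by apply: lee_wpmul2l; [rewrite lee_fin ltW | exact: ub].
  by apply: lee_wpmul2l; [rewrite lee_fin subr_ge0 ltW | exact: ub].
- exact: fge.
- apply/seteqP; split => x /=.
    by move=> fx; apply: contrapT => nAx; have := fgt x nAx; rewrite fx ltxx.
  by move=> Ax; apply/le_anti; rewrite fle // fge.
Qed.
End S.

Theorem mainTheorem19 (R : realType) (H : completeNormedModType R)
  (ip : H -> H -> R) (hip : is_hilbert_inner ip) (A : set H) (hA : A !=set0) :
  q_representable ip A <-> closed A.
Proof. by split; [exact: dir1 | exact: dir2]. Qed.
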